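(* Let $(\mathbb{X},d,\mu)$ be a proper metric measure space satisfying the $\delta$-annular decay property for some $\delta\in(0,1]$ with constant $D_\delta\geq1$. Let $\varrho$ be a continuous admissible radius function in a bounded domain $\Omega\subset\mathbb{X}$. Then there is $C=C(D_\delta,\mu)>0$ such that for every compact $K\subset\Omega$ and all $x,y\in K$, $$\frac{\mu(B_x\triangle B_y)}{\max\{\mu(B_x),\mu(B_y)\}}\leq C\left(\frac{\widehat\omega_\varrho(d(x,y))}{\varrho_K}\right)^\delta.$$
   Context: A metric space is proper if closed bounded sets are compact. A metric measure space $(\mathbb{X},d,\mu)$ is a metric space with a positive Borel regular measure $\mu$ with $0<\mu(B)<\infty$ for every ball $B$. It satisfies the $\delta$-annular decay property if there is $D_\delta\ge1$ with $\mu(B(x,R)\setminus B(x,r))\leq D_\delta\left(\frac{R-r}{R}\right)^\delta\mu(B(x,R))$ for all $x$, $0<r\leq R$. An admissible radius function in $\Omega$ is $\varrho\in C(\overline\Omega)$, $\varrho\ge0$, with $0<\varrho(x)\leq\mathrm{dist}(x,\partial\Omega)$ for $x\in\Omega$ and $\varrho=0$ exactly on $\partial\Omega$. $\varrho_K=\inf_K\varrho$, $B_x=\overline{B}(x,\varrho(x))$, $A\triangle B=(A\setminus B)\cup(B\setminus A)$. A modulus of continuity is a nondecreasing continuous $\omega:[0,\mathrm{diam}\,\Omega]\to[0,\infty)$ with $\omega(0)=0$. Fix a concave modulus of continuity $\omega_{\varrho,\Omega}$ for $\varrho$ on $\Omega$ with $\omega_{\varrho,\Omega}(\mathrm{diam}\,\Omega)\le\mathrm{diam}\,\Omega$;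 set $\widehat\omega_\varrho(t)=t$ if $\omega_{\varrho,\Omega}(t)\le t$ for all $t\in[0,\mathrm{diam}\,\Omega]$, and otherwise $\widehat\omega_\varrho(t)=\frac{\mathrm{diam}\,\Omega}{\omega_{\varrho,\Omega}(\mathrm{diam}\,\Omega)}\omega_{\varrho,\Omega}(t)$. *)

(* Defs.v *)
From HB Require Import structures.
From mathcomp Require Import all_boot all_order all_algebra.
From mathcomp Require Import all_classical all_reals all_analysis.
Set Implicit Arguments. Unset Strict Implicit. Unset Printing Implicit Defensive.
Import Order.TTheory GRing.Theory Num.Theory numFieldNormedType.Exports.
Local Open Scope classical_set_scope.
Local Open Scope ring_scope.

Section MetricDefs.
Variables (X : Type) (R : realType) (d : X -> X -> R).

Definition is_metric : Prop :=
  [/\ forall x y, 0 <= d x y,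
      forall x y, d x y = 0 <-> x = y,
      forall x y, d x y = d y x &
      forall x y z, d x z <= d x y + d y z].

Definition oball (x : X) (r : R) : set X := [set y | d x y < r].
Definition cball (x : X) (r : R) : set X := [set y | d x y <= r].

Definition d_open (U : set X) : Prop :=
  forall x, U x -> exists2 r : R, 0 < r & oball x r `<=` U.
Definition d_closed (A : set X) : Prop := d_open (~` A).
Definition d_bounded (A : set X) : Prop :=
  exists x : X, exists r : R, A `<=` oball x r.
Definition d_compact (A : set X) : Prop :=
  forall (I : Type) (U : I -> set X), (forall i, d_open (U i)) ->
    A `<=` \bigcup_i U i ->
    exists F : set I, finite_set F /\ A `<=` \bigcup_(i in F) U i.
Definition d_proper : Prop :=
  forall A, d_closed A -> d_bounded A -> d_compact A.
Definition d_connected (A : set X) : Prop :=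
  forall U V, d_open U -> d_open V -> A `<=` U `|` V ->
    A `&` U `&` V = set0 -> A `&` U = set0 \/ A `&` V = set0.
Definition d_domain (O : set X) : Prop :=
  [/\ O !=set0, d_open O & d_connected O].

Definition d_closure (A : set X) : set X :=
  [set x | forall r : R, 0 < r -> exists2 y, A y & d x y < r].
Definition d_interior (A : set X) : set X :=
  [set x | exists2 r : R, 0 < r & oball x r `<=` A].
Definition d_boundary (A : set X) : set X := d_closure A `\` d_interior A.

(* distance to a set, in extended reals (+oo for the empty set) *)
Definition d_dist (x : X) (A : set X) : \bar R :=
  ereal_inf [set (d x y)%:E | y in A].

Definition d_diam (A : set X) : R := sup [set d x y | x in A & y in A].

Definition d_continuous_on (A : set X) (f : X -> R) : Prop :=
  forall x, A x -> forall e : R, 0 < e -> exists2 del : R, 0 < del &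
    forall y, A y -> d x y < del -> `|f x - f y| < e.

Definition admissible_radius (O : set X) (rho : X -> R) : Prop :=
  [/\ d_continuous_on (d_closure O) rho,
      forall x, d_closure O x -> 0 <= rho x,
      forall x, O x -> 0 < rho x /\ ((rho x)%:E <= d_dist x (d_boundary O))%E &
      forall x, d_closure O x -> (rho x = 0 <-> d_boundary O x)].

Definition inf_on (K : set X) (rho : X -> R) : R := inf [set rho x | x in K].

End MetricDefs.

Definition symdiff (T : Type) (A B : set T) : set T := (A `\` B) `|` (B `\` A).

Section Modulus.
Variable R : realType.

Definition modulus_of_continuity (D : R) (w : R -> R) : Prop :=
  [/\ {in `[0, D] &, {homo w : s t / s <= t}},
      {within [set t : R | 0 <= t <= D], continuous w},
      forall t, 0 <= t <= D -> 0 <= w t &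
      w 0 = 0].

Definition concave_on (D : R) (w : R -> R) : Prop :=
  forall s t l, 0 <= s <= D -> 0 <= t <= D -> 0 <= l <= 1 ->
    l * w s + (1 - l) * w t <= w (l * s + (1 - l) * t).

Definition omega_hat (D : R) (w : R -> R) (t : R) : R :=
  if `[< forall s, 0 <= s <= D -> w s <= s >] then t
  else D / w D * w t.

End Modulus.

Definition modulus_for (X : Type) (R : realType) (d : X -> X -> R)
  (O : set X) (rho : X -> R) (w : R -> R) : Prop :=
  forall x y, O x -> O y -> `|rho x - rho y| <= w (d x y).

(* Main.v *)
Require Import Defs.
From HB Require Import structures.
From mathcomp Require Import all_boot all_order all_algebra.
From mathcomp Require Import all_classical all_reals all_analysis.
From mathcomp Require Import ring lra.
Import Order.TTheory GRing.Theory Num.Theory numFieldNormedType.Exports.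
Local Open Scope classical_set_scope.
Local Open Scope ring_scope.

Lemma omega_ge (R : realType) (D : R) w r : modulus_of_continuity D w ->
  concave_on D w -> w D <= D -> 0 <= r <= D ->
  r <= omega_hat D w r /\ w r <= omega_hat D w r.
Proof.
move=> [mono _ nn w0] conc wDD hr; rewrite /omega_hat; case: asboolP => [h|h].
  by split => //; exact: h.
have [s hs ws] : exists2 s, 0 <= s <= D & s < w s.
  apply: contrapT => hn; apply: h => s hs; rewrite leNgt; apply/negP => ws.
  by apply: hn; exists s.
have wsD : w s <= w D.
  move/andP: (hs) => [? ?].
  by apply: mono; rewrite ?in_itv /=; try (apply/andP; split); lra.
have D0 : 0 < D by move/andP: hs => [? ?]; lra.
have wD0 : 0 < w D by move/andP: hs => [? ?]; lra.
have q1 : 1 <= D / w D by rewrite ler_pdivlMr // mul1r.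
have wr0 : 0 <= w r by exact: nn.
split; last first.
  by rewrite -[X in X <= _]mul1r; apply: ler_wpM2r.
have l01 : 0 <= r / D <= 1.
  move/andP: hr => [? ?]; rewrite divr_ge0 ?ler_pdivrMr ?mul1r //; lra.
have := conc D 0 (r / D) _ _ l01.
have -> : r / D * D + (1 - r / D) * 0 = r by rewrite mulr0 addr0 divfK // gt_eqF.
rewrite w0 mulr0 addr0 => hc.
have hc' : r / D * w D <= w r.
  by apply: hc; apply/andP; split; lra.
have e : r = D / w D * (r / D * w D) by field; rewrite !gt_eqF.
rewrite {1}e; apply: ler_wpM2l => //; by rewrite divr_ge0 // ltW.
Qed.

Set Implicit Arguments. Unset Strict Implicit.
Section Met.
Variables (X : Type) (R : realType) (d : X -> X -> R).
Hypothesis hd : is_metric d.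

Lemma d_ge0 x y : 0 <= d x y. Proof. by case: hd. Qed.
Lemma d_sym x y : d x y = d y x. Proof. by case: hd. Qed.
Lemma d_tri x y z : d x z <= d x y + d y z. Proof. by case: hd. Qed.
Lemma d_xx x : d x x = 0. Proof. by case: hd => _ h _ _; apply/(h x x). Qed.
Lemma d_eq0 x y : d x y = 0 -> x = y. Proof. by move=> e; case: hd => _ h _ _; exact: ((h x y).1 e). Qed.

Lemma oball_open x r : d_open d (oball d x r).
Proof.
move=> z; rewrite /oball /= => hz; exists (r - d x z); first by rewrite subr_gt0.
move=> y; rewrite /oball /= => hy; have := d_tri x z y; move=> ?; lra.
Qed.

Lemma ogt_open x r : d_open d [set z | r < d x z].
Proof.
move=> z; rewrite /= => hz; exists (d x z - r); first by rewrite subr_gt0.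
move=> y /= hy; have := d_tri x y z; rewrite (d_sym y z) => ?; rewrite /oball /= in hy; lra.
Qed.

Lemma cballE x r : cball d x r = ~` [set z | r < d x z].
Proof.
by apply/seteqP; split => z /=; rewrite /cball /= ?leNgt => /negP.
Qed.

Lemma rhoK_pos (Omega K : set X) rho x0 : d_open d Omega ->
  admissible_radius d Omega rho -> d_compact d K -> K `<=` Omega -> K x0 ->
  0 < inf_on K rho.
Proof.
move=> hO [cont _ pos _] hK sK Kx0.
have incl z : Omega z -> d_closure d Omega z.
  by move=> Oz r r0; exists z => //; rewrite d_xx.
pose U (n : nat) := [set z | Omega z /\ n.+1%:R^-1 < rho z].
have Uo n : d_open d (U n).
  move=> z [Oz lt].
  have e0 : 0 < rho z - n.+1%:R^-1 by rewrite subr_gt0.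
  have [del del0 hdel] := cont z (incl z Oz) (rho z - n.+1%:R^-1) e0.
  have [r0 r00 sub] := hO z Oz.
  exists (Num.min del r0); first by rewrite lt_min del0 r00.
  move=> y; rewrite /oball/= lt_min => /andP[h1 h2].
  have Oy : Omega y by apply: sub; rewrite /oball/=.
  split => //.
  have := hdel y (incl y Oy) h1; rewrite ltr_norml => /andP[h3 h4].
  set c := n.+1%:R^-1 in h3 h4 *; lra.
have cov : K `<=` \bigcup_n U n.
  move=> z Kz; have Oz := sK z Kz; have [p _] := pos z Oz.
  have [k hk] := ltr_add_invr p; exists k => //; split => //; by rewrite add0r in hk.
have [F [fF sub]] := hK nat U Uo cov.
pose N := (\max_(i <- finmap.enum_fset (fset_set F)) i)%N.
have lbK z : K z -> N.+1%:R^-1 < rho z.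
  move=> Kz; have [i Fi [_ hi]] := sub z Kz.
  have iN : (i <= N)%N.
    by apply: (@leq_bigmax_seq _ _ xpredT (fun i => i)) => //; rewrite in_fset_set // inE.
  apply: le_lt_trans hi; rewrite lef_pV2 ?posrE // ler_nat ltnS //.
apply: (@lt_le_trans _ _ (N.+1%:R^-1)); first by rewrite invr_gt0.
apply: lb_le_inf; first by exists (rho x0), x0.
by move=> _ [z Kz <-]; exact/ltW/lbK.
Qed.

Lemma inf_on_le (K Omega : set X) (rho : X -> R) x : K `<=` Omega ->
  (forall z, Omega z -> 0 < rho z) -> K x -> inf_on K rho <= rho x.
Proof.
move=> sK pos Kx; apply: ge_inf; last by exists x.
by exists 0 => _ [z Kz <-]; exact/ltW/pos/sK.
Qed.

Lemma le_diam (Omega : set X) x y : d_bounded d Omega -> Omega x -> Omega y ->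
  d x y <= d_diam d Omega.
Proof.
move=> [z [r sub]] Ox Oy; apply: ub_le_sup; last by exists x => //; exists y.
exists (r + r) => _ [a Oa [b Ob <-]].
have := sub a Oa; have := sub b Ob; rewrite /oball/= => h1 h2.
have := d_tri a z b; rewrite (d_sym a z) => ?; lra.
Qed.
End Met.

Unset Implicit Arguments. Set Strict Implicit.
Section Meas.
Variables (dsp : measure_display) (X : measurableType dsp) (R : realType)
  (d : X -> X -> R) (mu : {measure set X -> \bar R}) (delta Dd : R).
Hypothesis hd : is_metric d.
Hypothesis hB : forall U, d_open d U -> measurable U.
Hypothesis hob : forall x r, 0 < r -> (0 < mu (oball d x r) < +oo)%E.
Hypothesis hcb : forall x r, 0 < r -> (0 < mu (cball d x r) < +oo)%E.
Hypothesis hdel : 0 < delta <= 1.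
Hypothesis hD : 1 <= Dd.
Hypothesis hann : forall x r Rr, 0 < r -> r <= Rr ->
     (mu (oball d x Rr `\` oball d x r)
       <= (Dd * ((Rr - r) / Rr) `^ delta)%:E * mu (oball d x Rr))%E.

Lemma mcball x r : measurable (cball d x r).
Proof. rewrite (cballE d); apply: measurableC; apply: hB; exact: ogt_open. Qed.
Lemma moball x r : measurable (oball d x r).
Proof. apply: hB; exact: oball_open. Qed.

Lemma finmu A : (0 < mu A < +oo)%E -> mu A = (fine (mu A))%:E.
Proof.
move=> /andP[h1 h2]; rewrite fineK // ge0_fin_numE // ltW //.
Qed.

Lemma annulus_bound x y a b t : 0 < a -> 0 < t -> Dd * t `^ delta <= 1/2 ->
  d x y < b -> a - b + d x y <= 2 * t * a ->
  (mu (cball d x a `\` cball d y b)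
     <= ((2 * Dd * (3 * t) `^ delta) * fine (mu (cball d x a)))%:E)%E.
Proof.
move=> a0 t0 hDt hb hab.
have [d0 dl1] : 0 < delta /\ delta <= 1 by move/andP: hdel.
have hD0 : 0 <= Dd := le_trans ler01 hD.
set r := d x y in hb hab.
set a' := a + a * t.
have a'0 : 0 < a' by rewrite /a'; nra.
have aa' : a < a' by rewrite /a'; nra.
set s := Num.min (b - r) a'.
have s0 : 0 < s by rewrite lt_min a'0 andbT subr_gt0.
have sa' : s <= a' by rewrite ge_min lexx orbT.
have incl : cball d x a `\` cball d y b `<=` oball d x a' `\` oball d x s.
  move=> z []; rewrite /cball /oball /= => hz nz; split; first lra.
  rewrite lt_min => /andP[h1 _]; apply: nz.
  have := d_tri hd y x z; rewrite (d_sym hd y x) -/r => ?; lra.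
set Mc := fine (mu (cball d x a)).
set Ma := fine (mu (oball d x a)).
set M' := fine (mu (oball d x a')).
have eMc : mu (cball d x a) = Mc%:E by apply: finmu; apply: hcb.
have eMa : mu (oball d x a) = Ma%:E by apply: finmu; apply: hob.
have eM' : mu (oball d x a') = M'%:E by apply: finmu; apply: hob.
have M'0 : 0 <= M'.
  by rewrite -lee_fin -eM'; apply: measure_ge0.
have MaMc : Ma <= Mc.
  rewrite -lee_fin -eMa -eMc; apply: le_measure; rewrite ?inE;
    [exact: moball | exact: mcball |].
  by move=> z; rewrite /oball /cball /=; apply: ltW.
have q1 : (a' - a) / a' <= t.
  by rewrite ler_pdivrMr // /a'; nra.
have q1' : ((a' - a) / a') `^ delta <= t `^ delta.
  apply: ge0_ler_powR => //; first exact: ltW.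
    by rewrite nnegrE; apply: divr_ge0; [rewrite subr_ge0; exact: ltW | exact: ltW].
  by rewrite nnegrE ltW.
have hM' : M' <= 2 * Ma.
  have h := hann x a a' a0 (ltW aa').
  have e : mu (oball d x a') = (mu (oball d x a' `\` oball d x a) + mu (oball d x a))%E.
    rewrite (measureDI mu (moball x a') (moball x a)) setIidr //.
    by move=> z; rewrite /oball /=; lra.
  have : (M'%:E <= (Dd * ((a' - a) / a') `^ delta)%:E * M'%:E + Ma%:E)%E.
    rewrite -{1}eM' e eMa; apply: leeD => //; rewrite -eM'; exact: h.
  rewrite -EFinM -EFinD lee_fin => h2.
  have : Dd * ((a' - a) / a') `^ delta * M' <= 1/2 * M'.
    apply: ler_wpM2r => //; apply: le_trans hDt.
    by apply: ler_wpM2l; [exact: (le_trans ler01 hD) | exact: q1'].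
  lra.
have q2 : (a' - s) / a' <= 3 * t.
  rewrite ler_pdivrMr //.
  have : a' - 3 * t * a' <= s.
    rewrite le_min; apply/andP; split; rewrite /a'; nra.
  lra.
have q2' : ((a' - s) / a') `^ delta <= (3 * t) `^ delta.
  apply: ge0_ler_powR => //; first exact: ltW.
    by rewrite nnegrE; apply: divr_ge0; [rewrite subr_ge0 | exact: ltW].
  rewrite nnegrE; nra.
apply: le_trans (_ : mu (oball d x a' `\` oball d x s) <= _)%E.
  apply: le_measure; rewrite ?inE //; apply: measurableD;
    (apply: mcball || apply: moball).
apply: le_trans (hann x s a' s0 sa') _.
rewrite eM' -EFinM lee_fin.
have p0 : 0 <= ((a' - s) / a') `^ delta by apply: powR_ge0.
have p1 : 0 <= (3 * t) `^ delta by apply: powR_ge0.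
have : Dd * ((a' - s) / a') `^ delta * M' <= Dd * (3 * t) `^ delta * (2 * Ma).
  apply: ler_pM; [exact: mulr_ge0 | done | | done].
  by apply: ler_wpM2l.
have : Dd * (3 * t) `^ delta * (2 * Ma) <= Dd * (3 * t) `^ delta * (2 * Mc).
  apply: ler_wpM2l; [exact: mulr_ge0 | lra].
move=> h1 h2; apply: (le_trans h2); apply: le_trans h1 _.
by rewrite le_eqVlt; apply/orP; left; apply/eqP; ring.
Qed.
End Meas.

Unset Implicit Arguments. Set Strict Implicit.
Theorem lemma3p8 (dsp : measure_display) (X : measurableType dsp) (R : realType)
  (d : X -> X -> R) (mu : {measure set X -> \bar R}) (delta Dd : R) :
  is_metric d ->
  d_proper d ->
  (* Borel measure: open sets are measurable *)
  (forall U, d_open d U -> measurable U) ->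
  (* Borel regularity *)
  (forall A, measurable A -> exists B,
      smallest (sigma_algebra setT) (d_open d) B /\ A `<=` B /\ mu A = mu B) ->
  (* balls have positive finite measure *)
  (forall x r, 0 < r -> (0 < mu (oball d x r) < +oo)%E) ->
  (forall x r, 0 < r -> (0 < mu (cball d x r) < +oo)%E) ->
  (* delta-annular decay *)
  0 < delta <= 1 -> 1 <= Dd ->
  (forall x r Rr, 0 < r -> r <= Rr ->
     (mu (oball d x Rr `\` oball d x r)
       <= (Dd * ((Rr - r) / Rr) `^ delta)%:E * mu (oball d x Rr))%E) ->
  exists2 C : R, 0 < C &
  forall (Omega : set X) (rho : X -> R) (w : R -> R),
    d_domain d Omega -> d_bounded d Omega ->
    admissible_radius d Omega rho ->
    modulus_of_continuity (d_diam d Omega) w ->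
    concave_on (d_diam d Omega) w ->
    modulus_for d Omega rho w ->
    w (d_diam d Omega) <= d_diam d Omega ->
    forall K : set X, d_compact d K -> K `<=` Omega ->
    forall x y, K x -> K y ->
      fine (mu (symdiff (cball d x (rho x)) (cball d y (rho y))))
        / Num.max (fine (mu (cball d x (rho x)))) (fine (mu (cball d y (rho y))))
      <= C * (omega_hat (d_diam d Omega) w (d x y) / inf_on K rho) `^ delta.
Proof.
move=> hd hprop hB hreg hob hcb hdel hD hann.
have hD0 : 0 <= Dd := le_trans ler01 hD.
have [d0 dl1] : 0 < delta /\ delta <= 1 by move/andP: hdel.
exists (12 * Dd); first lra.
move=> Omega rho w [ne hO conn] hbnd adm mod conc mfor wDD K hK sK x y Kx Ky.
set D := d_diam d Omega.
have Ox := sK x Kx; have Oy := sK y Ky.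
have [_ _ pos _] := adm.
have a0 : 0 < rho x := (pos x Ox).1.
have b0 : 0 < rho y := (pos y Oy).1.
have mBx := mcball _ _ _ _ hd hB x (rho x).
have mBy := mcball _ _ _ _ hd hB y (rho y).
set Bx := cball d x (rho x) in mBx *.
set By := cball d y (rho y) in mBy *.
have eBx : mu Bx = (fine (mu Bx))%:E by apply: (finmu _ _ _ mu); apply: hcb.
have eBy : mu By = (fine (mu By))%:E by apply: (finmu _ _ _ mu); apply: hcb.
set Mx := fine (mu Bx) in eBx *.
set My := fine (mu By) in eBy *.
have Mx0 : 0 < Mx by rewrite -lte_fin -eBx; case/andP: (hcb x _ a0).
have My0 : 0 < My by rewrite -lte_fin -eBy; case/andP: (hcb y _ b0).
set M := Num.max Mx My.
have MxM : Mx <= M by rewrite le_max lexx.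
have MyM : My <= M by rewrite le_max lexx orbT.
have M0 : 0 < M by lra.
have rK0 : 0 < inf_on K rho := rhoK_pos hd hO adm hK sK Kx.
have rKx : inf_on K rho <= rho x.
  by apply: (inf_on_le sK) => // z Oz; exact: (pos z Oz).1.
have rKy : inf_on K rho <= rho y.
  by apply: (inf_on_le sK) => // z Oz; exact: (pos z Oz).1.
set rK := inf_on K rho in rK0 rKx rKy *.
set S := symdiff Bx By.
have mS : measurable S by apply: measurableU; apply: measurableD.
have S0 : (0 <= mu S)%E by apply: measure_ge0.
have hS : (mu S <= mu (Bx `\` By) + mu (By `\` Bx))%E.
  by apply: measureU2; apply: measurableD.
case: (eqVneq x y) => [exy|nxy].
  have -> : S = set0.
    by rewrite /S /symdiff /By -exy -/Bx setDv setU0.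
  rewrite measure0 /= mul0r; apply: mulr_ge0; first lra.
  exact: powR_ge0.
have r0 : 0 < d x y.
  rewrite lt_neqAle d_ge0 // andbT; apply/eqP => h.
  by move/negP: nxy; apply; apply/eqP; apply: (d_eq0 hd); rewrite h.
have rD : 0 <= d x y <= D by rewrite d_ge0 //= le_diam.
have [rom wom] := omega_ge _ _ _ _ mod conc wDD rD.
set om := omega_hat D w (d x y) in rom wom *.
have hxy := mfor x y Ox Oy.
set t := om / rK.
have t0 : 0 < t by rewrite divr_gt0 //; lra.
have omt : om = t * rK by rewrite /t divfK // gt_eqF.
have pt0 : 0 <= t `^ delta by apply: powR_ge0.
have eS : mu S = (fine (mu S))%:E.
  rewrite fineK // ge0_fin_numE //; apply: le_lt_trans hS _.
  apply: (@le_lt_trans _ _ (mu Bx + mu By)%E).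
    apply: leeD; apply: le_measure; rewrite ?inE //; try apply: measurableD => //;
      by move=> z [].
  by rewrite eBx eBy -EFinD ltry.
set MS := fine (mu S) in eS *.
rewrite ler_pdivrMr //.
have [small|big] := lerP (Dd * t `^ delta) (1/2).
  have t1 : t < 1.
    rewrite ltNge; apply/negP => t1.
    have e1 : 1 `^ delta = 1 :> R by rewrite powR1.
    have h : 1 <= t `^ delta.
      rewrite -[X in X <= _]e1; apply: ge0_ler_powR; rewrite ?nnegrE //; lra.
    have : 1 <= Dd * t `^ delta by rewrite -[1]mulr1; apply: ler_pM.
    lra.
  move: hxy; rewrite ler_norml => /andP[ab1 ab2].
  have trx : t * rK <= t * rho x by apply: ler_wpM2l; lra.
  have try' : t * rK <= t * rho y by apply: ler_wpM2l; lra.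
  have trK : t * rK < rK by rewrite -[X in _ < X]mul1r ltr_pM2r.
  have c1 : d x y < rho y by lra.
  have c1' : d x y < rho x by lra.
  have c2 : rho x - rho y + d x y <= 2 * t * rho x by lra.
  have c2' : rho y - rho x + d x y <= 2 * t * rho y by lra.
  have h1 := annulus_bound _ _ _ _ _ _ _ hd hB hob hcb hdel hD hann x y (rho x) (rho y) t a0 t0 small c1 c2.
  have h2 := annulus_bound _ _ _ _ _ _ _ hd hB hob hcb hdel hD hann y x (rho y) (rho x) t b0 t0 small.
  rewrite (d_sym hd y x) in h2; have {h2} h2 := h2 c1' c2'.
  rewrite -/Bx -/By -/Mx -/My in h1 h2.
  have hMS : MS <= 2 * Dd * (3 * t) `^ delta * Mx + 2 * Dd * (3 * t) `^ delta * My.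
    rewrite -lee_fin -eS EFinD; apply: le_trans hS _; exact: leeD.
  have e3 : (3 * t) `^ delta = 3 `^ delta * t `^ delta by rewrite powRM //; lra.
  have q3 : 3 `^ delta <= 3 :> R by apply: ler1_powR => //; lra.
  have q30 : 0 <= 3 `^ delta :> R by apply: powR_ge0.
  rewrite e3 in hMS.
  set P := t `^ delta in pt0 hMS *.
  set Q := 3 `^ delta in q3 q30 hMS.
  have hk : 2 * Dd * (Q * P) <= 6 * Dd * P.
    have : Q * P <= 3 * P by apply: ler_wpM2r.
    nra.
  have hk0 : 0 <= 2 * Dd * (Q * P) by apply: mulr_ge0; [lra | exact: mulr_ge0].
  have : 2 * Dd * (Q * P) * Mx + 2 * Dd * (Q * P) * My <= 6 * Dd * P * (2 * M).
    rewrite -mulrDr; apply: ler_pM => //; lra.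
  lra.
have hMS : MS <= Mx + My.
  rewrite -lee_fin -eS EFinD -eBx -eBy; apply: le_trans hS _.
  apply: leeD; apply: le_measure; rewrite ?inE //; try apply: measurableD => //;
    by move=> z [].
have : 6 * M <= 12 * Dd * t `^ delta * M.
  apply: ler_wpM2r; lra.
lra.
Qed.
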